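(* Let $\star$ be a $t$-definer, let $(X_1,d_1^\star),\dots,(X_n,d_n^\star)$ be $\star$-metric spaces with $d_i^\star(x,y)\le 1$ for all $x,y\in X_i$ and $1\le i\le n$, and let $X=\bigoplus_{i=1}^n X_i$ be their disjoint union. Define $d_q^\star$ on $X$ by $d_q^\star(x,y)=d_i^\star(x,y)$ if $x,y\in X_i$ for some $i$, and $d_q^\star(x,y)=1$ otherwise. Then $(X,d_q^\star)$ is totally bounded if and only if every $(X_i,d_i^\star)$ is totally bounded.
   Context: A $t$-definer is a function $\star:[0,\infty)\times[0,\infty)\to[0,\infty)$ such that for all $a,b,c\ge 0$: $a\star b=b\star a$; $a\star(b\star c)=(a\star b)\star c$; if $a\le b$ then $a\star c\le b\star c$; $a\star 0=a$; and $\star$ is continuous in its first variable with respect to the Euclidean topology. Given a nonempty set $Y$, a $\star$-metric on $Y$ is a function $\rho:Y\times Y\to[0,\infty)$ such that for all $x,y,z\in Y$: $\rho(x,y)=0$ iff $x=y$; $\rho(x,y)=\rho(y,x)$; and $\rho(x,y)\le \rho(x,z)\star \rho(z,y)$. Under the stated bound, $d_q^\star$ is a $\star$-metric on $X$. A $\star$-metric space $(Y,\rho)$ is totally bounded if for every $\epsilon>0$ there is a finite set $F\subseteq Y$ with $Y=\bigcup_{x\in F}\{y\in Y:\rho(x,y)<\epsilon\}$. *)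

(* Defs.v *)
From Stdlib Require Import Reals Arith List.
Open Scope R_scope.

(* A t-definer: an operation on [0,oo), represented as R -> R -> R whose
   axioms are required on nonnegative arguments (and which maps [0,oo)^2
   into [0,oo)). *)
Definition t_definer (star : R -> R -> R) : Prop :=
  (forall a b, 0 <= a -> 0 <= b -> 0 <= star a b) /\
  (forall a b, 0 <= a -> 0 <= b -> star a b = star b a) /\
  (forall a b c, 0 <= a -> 0 <= b -> 0 <= c ->
     star a (star b c) = star (star a b) c) /\
  (forall a b c, 0 <= a -> 0 <= b -> 0 <= c -> a <= b -> star a c <= star b c) /\
  (forall a, 0 <= a -> star a 0 = a) /\
  (forall c a, 0 <= c -> 0 <= a -> forall eps, 0 < eps ->
     exists delta, 0 < delta /\
       forall a', 0 <= a' -> Rabs (a' - a) < delta ->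
         Rabs (star a' c - star a c) < eps).

Definition star_metric (star : R -> R -> R) (Y : Type) (rho : Y -> Y -> R) : Prop :=
  inhabited Y /\
  (forall x y, 0 <= rho x y) /\
  (forall x y, rho x y = 0 <-> x = y) /\
  (forall x y, rho x y = rho y x) /\
  (forall x y z, rho x y <= star (rho x z) (rho z y)).

Definition totally_bounded (Y : Type) (rho : Y -> Y -> R) : Prop :=
  forall eps, 0 < eps ->
    exists F : list Y, forall y : Y, exists x, In x F /\ rho x y < eps.

(* Index set {0, ..., n-1} (standing for {1, ..., n}). *)
Definition Idx (n : nat) : Type := { i : nat | (i < n)%nat }.

Lemma Idx_eq_dec (n : nat) (i j : Idx n) : {i = j} + {i <> j}.
Proof.
  destruct i as [i Hi], j as [j Hj].
  destruct (Nat.eq_dec i j) as [e|ne].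
  - left. subst j. f_equal. apply Peano_dec.le_unique.
  - right. intros H. apply ne. now inversion H.
Defined.

Definition disj_union (n : nat) (X : Idx n -> Type) : Type := { i : Idx n & X i }.

Definition d_q (n : nat) (X : Idx n -> Type) (d : forall i, X i -> X i -> R)
  (x y : disj_union n X) : R :=
  match Idx_eq_dec n (projT1 x) (projT1 y) with
  | left e => d (projT1 y) (eq_rect _ X (projT2 x) _ e) (projT2 y)
  | right _ => 1
  end.

(* Main.v *)
Require Import Defs.
From Stdlib Require Import Reals Arith List Lra Lia Eqdep_dec.
Open Scope R_scope.

Lemma dq_same n (X : Idx n -> Type) d i (x y : X i) :
  d_q n X d (existT _ i x) (existT _ i y) = d i x y.
Proof.
  unfold d_q; simpl. destruct (Idx_eq_dec n i i) as [e|ne].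
  - rewrite (UIP_dec (Idx_eq_dec n) e eq_refl). reflexivity.
  - contradiction.
Qed.

Definition proj_list n (X : Idx n -> Type) (i : Idx n) (F : list (disj_union n X)) : list (X i) :=
  flat_map (fun x => match Idx_eq_dec n (projT1 x) i with
                     | left e => eq_rect _ X (projT2 x) i e :: nil
                     | right _ => nil end) F.

Theorem theorem3p9 (star : R -> R -> R) (n : nat) (X : Idx n -> Type)
  (d : forall i : Idx n, X i -> X i -> R) :
  t_definer star ->
  (1 <= n)%nat ->
  (forall i, star_metric star (X i) (d i)) ->
  (forall i (x y : X i), d i x y <= 1) ->
  (totally_bounded (disj_union n X) (d_q n X d) <->
   forall i, totally_bounded (X i) (d i)).
Proof.
  intros _ _ _ Hle. split.
  - intros H i eps Heps.
    destruct (H (Rmin eps 1)) as [F HF].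
    { apply Rmin_glb_lt; lra. }
    exists (proj_list n X i F). intros y.
    destruct (HF (existT _ i y)) as [x [Hin Hd]].
    unfold d_q in Hd; simpl in Hd.
    assert (Hm1 := Rmin_r eps 1). assert (Hm2 := Rmin_l eps 1).
    destruct (Idx_eq_dec n (projT1 x) i) as [e|ne] eqn:E.
    + exists (eq_rect _ X (projT2 x) i e). split; [|lra].
      unfold proj_list. apply in_flat_map. exists x. split; [exact Hin|].
      rewrite E. left; reflexivity.
    + lra.
  - intros H eps Heps.
    assert (Hk : forall k, (k <= n)%nat -> exists L : list (disj_union n X),
      forall i (y : X i), (proj1_sig i < k)%nat ->
        exists x, In x L /\ d_q n X d x (existT _ i y) < eps).
    { induction k as [|k IH]; intros Hkn.
      - exists nil. intros i y Hi. lia.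
      - destruct (IH ltac:(lia)) as [L HL].
        assert (Hk' : (k < n)%nat) by lia.
        set (ik := exist (fun j => (j < n)%nat) k Hk' : Idx n).
        destruct (H ik eps Heps) as [Fk HFk].
        exists (L ++ map (fun z => existT X ik z) Fk).
        intros i y Hi.
        destruct (Nat.eq_dec (proj1_sig i) k) as [Ei|Ni].
        + assert (i = ik).
          { destruct i as [j Hj]; unfold ik; simpl in Ei; subst j.
            f_equal. apply Peano_dec.le_unique. }
          subst i. destruct (HFk y) as [x [Hx Hd]].
          exists (existT X ik x). split.
          * apply in_or_app; right. apply in_map. exact Hx.
          * rewrite dq_same. exact Hd.
        + destruct (HL i y ltac:(lia)) as [x [Hx Hd]].
          exists x. split; [apply in_or_app; left; exact Hx | exact Hd]. }
    destruct (Hk n (le_n n)) as [L HL].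
    exists L. intros [i y]. apply HL. exact (proj2_sig i).
Qed.
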